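(* Let $n\geq 4$, let $\mathfrak g=sl_n(\mathbb R)$ and let $G$ be the connected, simply connected Lie group with Lie algebra $\mathfrak g$ (the two-sheeted covering of $SL_n(\mathbb R)$), acting on $\mathfrak g$ by the adjoint action. Let $B\subset G$ be the inverse image in $G$ of the subgroup of upper triangular matrices of $SL_n(\mathbb R)$. Let $k$ be an integer with $2\leq k\leq n/2$ and $\varepsilon\in\{1,-1\}$, put $$X_{k,\varepsilon}=\sum_{i=1}^{k-1}E_{n+1-i,\,i}+\varepsilon\,E_{n+1-k,\,k}\in\mathfrak g,$$ where $E_{a,b}$ denotes the elementary matrix with a $1$ in position $(a,b)$, and let $O_{k,\varepsilon}=G\cdot X_{k,\varepsilon}$ be its adjoint orbit. Then the $B$-orbit $B\cdot X_{k,\varepsilon}$ is the unique dense $B$-orbit contained in $O_{k,\varepsilon}$.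
   Context: In the paper's notation, with the usual root system $\varepsilon_i-\varepsilon_j$ of $sl_n$, simple roots $\alpha_k=\varepsilon_k-\varepsilon_{k+1}$, root vectors $X_{\varepsilon_i-\varepsilon_j}=E_{i,j}$, $\beta_{i,j}=\alpha_i+\dots+\alpha_j$ and $\beta_i=\beta_{i,n-i}$, one has $X_{-\beta_i}=E_{n+1-i,i}$, so $X_{k,\varepsilon}=\sum_{i=1}^{k-1}X_{-\beta_i}+\varepsilon X_{-\beta_k}$. The orbits $O_{k,\varepsilon}$ ($2\le k\le n/2$) are the non-minimal spherical nilpotent orbits of $sl_n(\mathbb R)$. *)

(* Defs.v *)
From HB Require Import structures.
From mathcomp Require Import all_boot all_order all_algebra.
From mathcomp Require Import all_classical all_reals topology normedtype.
Set Implicit Arguments. Unset Strict Implicit. Unset Printing Implicit Defensive.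
Import Order.TTheory GRing.Theory Num.Theory.
Import numFieldNormedType.Exports.
Local Open Scope ring_scope.
Local Open Scope classical_set_scope.

(* Elementary matrix E_{a,b}, 1-based indices as in the paper. *)
Definition Emx (R : realType) (n a b : nat) : 'M[R]_n :=
  \matrix_(i < n, j < n) (((i.+1 == a) && (j.+1 == b))%N)%:R.

Definition sl (R : realType) (n : nat) : set 'M[R]_n := [set X | \tr X = 0].

Definition SL (R : realType) (n : nat) : set 'M[R]_n := [set g | \det g = 1].

Definition SLupper (R : realType) (n : nat) : set 'M[R]_n :=
  [set g | \det g = 1 /\ forall i j : 'I_n, (j < i)%N -> g i j = 0].

Definition Ad (R : realType) (n : nat) (g X : 'M[R]_n) : 'M[R]_n :=
  g *m X *m invmx g.

Definition Ad_orbit (R : realType) (n : nat) (H : set 'M[R]_n) (X : 'M[R]_n)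
  : set 'M[R]_n := [set Ad g X | g in H].

(* S is a dense subset of O (for the subspace topology of O inside 'M_n) *)
Definition dense_in (T : topologicalType) (S O : set T) : Prop :=
  S `<=` O /\ O `<=` closure S.

Definition Xke (R : realType) (n k : nat) (eps : R) : 'M[R]_n :=
  \sum_(1 <= i < k) Emx R n (n.+1 - i) i + eps *: Emx R n (n.+1 - k) k.

Arguments Emx R n a b : clear implicits.
Arguments sl R n : clear implicits.
Arguments SL R n : clear implicits.
Arguments SLupper R n : clear implicits.
Arguments Xke R n k eps : clear implicits.

(* Main.v *)
Require Import Defs.
From HB Require Import structures.
From mathcomp Require Import all_boot all_order all_algebra.
From mathcomp Require Import all_classical all_reals topology normedtype.
From mathcomp Require Import derive zify ring lra perm.
Import Order.TTheory GRing.Theory Num.Theory.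
Import numFieldNormedType.Exports.
Local Open Scope ring_scope.
Local Open Scope classical_set_scope.
Set Implicit Arguments. Unset Strict Implicit. Unset Printing Implicit Defensive.

Section Gen.
Variable T : pzSemiRingType.

Lemma sum_nat_delta lo hi b (F : nat -> T) :
  \sum_(lo <= i < hi) ((i == b)%:R * F i) = if (lo <= b < hi)%N then F b else 0.
Proof.
elim: hi => [|hi IH]; first by rewrite big_geq // ltn0 andbF.
case: (leqP lo hi) => h.
  rewrite big_nat_recr //= IH.
  case: (eqVneq hi b) => [e|nb].
    by subst b; rewrite ltnn andbF add0r ltnSn andbT h mul1r.
  rewrite ?(negbTE nb) mul0r addr0; congr (if _ then _ else _).
  have nb' : b != hi by rewrite eq_sym.
  by rewrite ltnS [(b <= hi)%N]leq_eqVlt (negbTE nb').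
rewrite big_geq //; case: ifP => //; lia.
Qed.

Lemma sum_ord_delta n b (F : nat -> T) :
  \sum_(i < n) ((i == b :> nat)%:R * F i) = if (b < n)%N then F b else 0.
Proof.
by rewrite -(big_mkord xpredT (fun i => (i == b)%:R * F i)) sum_nat_delta leq0n.
Qed.

Lemma sum_ord_delta_r n b (F : nat -> T) :
  \sum_(i < n) (F i * (i == b :> nat)%:R) = if (b < n)%N then F b else 0.
Proof.
rewrite -sum_ord_delta; apply: eq_bigr => i _.
by case: eqP => _; rewrite ?mulr1 ?mul1r ?mulr0 ?mul0r.
Qed.

End Gen.

Lemma natr_and (T : pzSemiRingType) (x y : bool) : ((x && y)%:R : T) = x%:R * y%:R.
Proof. by case: x; case: y; rewrite ?mul1r ?mul0r. Qed.

Lemma sum_delta_ord (T : pzSemiRingType) n (a : 'I_n) (F : 'I_n -> T) :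
  \sum_c ((a == c)%:R * F c) = F a.
Proof.
rewrite (bigD1 a) //= eqxx mul1r big1 ?addr0 // => i /negbTE.
by rewrite eq_sym => ->; rewrite mul0r.
Qed.

Definition Rk {T : pzSemiRingType} n k : 'M[T]_n :=
  \matrix_(r, a) ((r < k)%N && (a == rev_ord r))%:R.
Definition Ein {T : pzSemiRingType} n k : 'M[T]_n :=
  \matrix_(r, c) ((r < k)%N && (r == c))%:R.
Definition Kn {T : pzSemiRingType} n k (Y : 'M[T]_n) : 'M[T]_n :=
  Rk n k *m Y *m Ein n k.
Definition Modm {T : pzSemiRingType} n m (A : 'M[T]_n) : 'M[T]_n :=
  \matrix_(r, c) if (r < m)%N then A r c else (r == c)%:R.

Section Entries.
Variable T : pzSemiRingType.
Variables (n k : nat).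

Lemma EinM p (M : 'M[T]_(n, p)) a b :
  (Ein n k *m M) a b = if (a < k)%N then M a b else 0.
Proof.
rewrite mxE; under eq_bigr do rewrite mxE natr_and -mulrA.
rewrite -mulr_sumr sum_delta_ord; by case: (a < k)%N; rewrite ?mul1r ?mul0r.
Qed.

Lemma MEin p (M : 'M[T]_(p, n)) a b :
  (M *m Ein n k) a b = if (b < k)%N then M a b else 0.
Proof.
rewrite mxE; under eq_bigr => c _ do rewrite mxE natr_and.
rewrite (bigD1 b) //= eqxx mulr1 big1 ?addr0.
  by case: (b < k)%N; rewrite ?mulr1 ?mulr0.
move=> i /negbTE ib; by rewrite ib mulr0n !mulr0.
Qed.

Lemma RkM p (M : 'M[T]_(n, p)) r c :
  (Rk n k *m M) r c = if (r < k)%N then M (rev_ord r) c else 0.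
Proof.
rewrite mxE; under eq_bigr do rewrite mxE natr_and -mulrA.
rewrite -mulr_sumr.
rewrite (bigD1 (rev_ord r)) //= eqxx mul1r big1 ?addr0.
  by case: (r < k)%N; rewrite ?mul1r ?mul0r.
by move=> i /negbTE ->; rewrite mul0r.
Qed.

Lemma ModmM m p (A : 'M[T]_n) (v : 'M[T]_(n, p)) r c :
  (Modm m A *m v) r c = if (r < m)%N then (A *m v) r c else v r c.
Proof.
rewrite !mxE; case: ifP => h.
  by apply: eq_bigr => i _; rewrite mxE h.
under eq_bigr do rewrite mxE h.
exact: sum_delta_ord.
Qed.

End Entries.

Lemma XkeE (R : realType) n k eps (a b : 'I_n) :
  Xke R n k eps a b =
  if (b < k)%N && (a + b == n.-1)%N then (if (b == k.-1 :> nat) then eps else 1) else 0.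
Proof.
rewrite /Xke /Emx !mxE summxE.
under eq_bigr do rewrite mxE.
rewrite (eq_bigr (fun i => (i == b.+1)%:R * (a.+1 == (n.+1 - i)%N)%:R)); last first.
  by move=> i _; rewrite andbC [b.+1 == i]eq_sym; case: eqP => _;
     rewrite ?mul1r ?mul0r ?andbF ?andbT.
rewrite sum_nat_delta.
have ha := ltn_ord a; have hb := ltn_ord b.
case: (ltngtP b.+1 k) => hbk.
- have -> : (b == k.-1 :> nat) = false by apply/eqP; lia.
  have -> : (a.+1 == (n.+1 - b.+1)%N) = (a + b == n.-1)%N by apply/eqP/eqP; lia.
  rewrite andbF mulr0n mulr0 addr0 /=.
  by case: ifP.
- by rewrite !andbF /= ?mulr0n ?mulr0 ?add0r.
- subst k; rewrite andbT /= add0r eqxx.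
  have -> : (a.+1 == (n.+1 - b.+1)%N) = (a + b == n.-1)%N by apply/eqP/eqP; lia.
  by case: ifP => _; rewrite ?mulr1n ?mulr0n ?mulr1 ?mulr0.
Qed.

Section XL.
Variables (R : realType) (n k : nat) (eps : R).
Hypotheses (hk1 : (1 <= k)%N) (hkn : (k.*2 <= n)%N) (heps : eps = 1 \/ eps = -1).

Definition cc (b : nat) : R := if b == k.-1 then eps else 1.

Lemma cc_neq0 b : cc b != 0.
Proof. by rewrite /cc; case: ifP => _; [case: heps => ->|]; rewrite ?oppr_eq0 oner_eq0. Qed.

Lemma XE (a b : 'I_n) : Xke R n k eps a b =
  if (b < k)%N && (a + b == n.-1)%N then cc b else 0.
Proof. by rewrite XkeE. Qed.

Lemma X_tr : \tr (Xke R n k eps) = 0.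
Proof.
rewrite /mxtrace big1 // => i _; rewrite XE.
case: ifP => // /andP [h1 /eqP h2]; have := ltn_ord i; lia.
Qed.

Lemma MX m (M : 'M[R]_(m, n)) a (j : 'I_n) :
  (M *m Xke R n k eps) a j = if (j < k)%N then M a (rev_ord j) * cc j else 0.
Proof.
rewrite mxE (bigD1 (rev_ord j)) //= big1 => [|i hi].
  rewrite XE /=.
  have -> : (n - j.+1 + j == n.-1)%N by apply/eqP; have := ltn_ord j; lia.
  by rewrite andbT addr0; case: ifP; rewrite ?mulr0.
rewrite XE.
have -> : (i + j == n.-1)%N = false; last by rewrite andbF mulr0.
apply: negbTE; apply/negP => /eqP e; move/negP: hi; apply; apply/eqP; apply: val_inj => /=.
have := ltn_ord j; lia.
Qed.

Lemma XM m (M : 'M[R]_(n, m)) (a : 'I_n) b :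
  (Xke R n k eps *m M) a b = if (rev_ord a < k)%N then cc (rev_ord a) * M (rev_ord a) b else 0.
Proof.
rewrite mxE (bigD1 (rev_ord a)) //= big1 => [|i hi].
  rewrite XE /=.
  have -> : (a + (n - a.+1) == n.-1)%N by apply/eqP; have := ltn_ord a; lia.
  by rewrite andbT addr0; case: ifP; rewrite ?mul0r.
rewrite XE.
have -> : (a + i == n.-1)%N = false; last by rewrite andbF mul0r.
apply: negbTE; apply/negP => /eqP e; move/negP: hi; apply; apply/eqP; apply: val_inj => /=.
have := ltn_ord a; lia.
Qed.

Lemma XX : Xke R n k eps *m Xke R n k eps = 0.
Proof.
apply/matrixP => a b; rewrite MX XE [RHS]mxE.
case: ifP => // hb; rewrite /=.
have -> : (n - b.+1 < k)%N = false by have := ltn_ord b; lia.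
by rewrite mul0r.
Qed.

Lemma EinX : Ein n k *m Xke R n k eps = 0.
Proof.
apply/matrixP => a b; rewrite EinM XE [RHS]mxE.
case: ifP => // ha; case: ifP => // /andP [hb /eqP e].
have := ltn_ord b; lia.
Qed.

Lemma XEin : Xke R n k eps *m Ein n k = Xke R n k eps.
Proof.
apply/matrixP => a b; rewrite MEin XE.
by case: ifP => // ->.
Qed.

End XL.

Lemma central_pos (R : realType) k (eps : R) :
  (1 <= k)%N -> (eps = 1 \/ eps = -1) -> forall s : 'M[R]_(k + k),
  s *m Xke R (k + k) k eps = Xke R (k + k) k eps *m s -> \det s != 0 -> 0 < \det s.
Proof.
move=> hk1 heps s hs ds.
pose J : 'M[R]_k := \matrix_(r, c) if (r + c == k.-1)%N then cc k eps c else 0.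
have XJ : Xke R (k + k) k eps = block_mx 0 0 J 0.
  apply/matrixP => i j; rewrite XE.
  rewrite -[i]splitK -[j]splitK.
  case: (fintype.split i) => i'; case: (fintype.split j) => j' /=.
  - rewrite block_mxEul mxE; case: ifP => // /andP [h1 /eqP h2].
    have := ltn_ord i'; lia.
  - rewrite block_mxEur mxE; case: ifP => // /andP [h1 /eqP h2].
    have := ltn_ord j'; lia.
  - rewrite block_mxEdl !mxE.
    have -> : (k + i' + j' == (k + k).-1)%N = (i' + j' == k.-1)%N by apply/eqP/eqP; lia.
    by rewrite ltn_ord.
  - rewrite block_mxEdr mxE; case: ifP => // /andP [h1 /eqP h2].
    lia.
pose J' : 'M[R]_k := \matrix_(r, c) if (r + c == k.-1)%N then (cc k eps r)^-1 else 0.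
have JJ' : J *m J' = 1%:M.
  apply/matrixP => r c; rewrite !mxE.
  have hr := ltn_ord r.
  pose m0 : 'I_k := Ordinal (_ : (k.-1 - r < k)%N).
  rewrite (bigD1 (@Ordinal k (k.-1 - r) (ltac:(lia)))) //= big1 => [|m hm].
    rewrite !mxE /=.
    have -> : (r + (k.-1 - r) == k.-1)%N by apply/eqP; lia.
    have -> : (k.-1 - r + c == k.-1)%N = (r == c) by apply/eqP/eqP => [e|e]; [apply: val_inj => /=; have := ltn_ord c; lia | rewrite e; have := ltn_ord c; lia].
    rewrite addr0; case: eqP => _; rewrite ?mulr0 // mulfV //; exact: cc_neq0.
  rewrite !mxE; case: ifP; last by rewrite mul0r.
  move=> /eqP e; exfalso; move/negP: hm; apply; apply/eqP; apply: val_inj => /=; lia.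
have [uJ _] := mulmx1_unit JJ'.
move: hs ds; rewrite XJ -(submxK s) !mulmx_block !mulmx0 !mul0mx !addr0 !add0r.
move=> /eq_block_mx [QJ _ TJ JQ].
have Q0 : ursubmx s = 0.
  by rewrite -[ursubmx s](mulKmx uJ) -JQ mulmx0.
rewrite Q0 det_lblock => ds.
have DT : \det (drsubmx s) = \det (ulsubmx s).
  have : drsubmx s = J *m ulsubmx s *m invmx J by rewrite -TJ mulmxK.
  move=> ->; rewrite !det_mulmx det_inv mulrC mulrA mulVf ?mul1r //.
  by rewrite -unitfE -unitmxE.
move: ds; rewrite DT => ds.
by rewrite lt_neqAle eq_sym ds -expr2 sqr_ge0.
Qed.

Arguments Kn {T} n k Y.
Definition good (R : realType) n k (Y : 'M[R]_n) :=
  forall m, (m <= k)%N -> \det (Modm m (Kn n k Y)) != 0.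

Definition dl {T : pzSemiRingType} n (i : nat) : 'cV[T]_n := \col_(a < n) ((a : nat) == i)%:R.

Lemma subE (T : pzRingType) m p (A B : 'M[T]_(m, p)) i j : (A - B) i j = A i j - B i j.
Proof. by rewrite !mxE. Qed.
Lemma addE (T : pzRingType) m p (A B : 'M[T]_(m, p)) i j : (A + B) i j = A i j + B i j.
Proof. by rewrite !mxE. Qed.
Lemma sclE (T : pzRingType) m p x (A : 'M[T]_(m, p)) i j : (x *: A) i j = x * A i j.
Proof. by rewrite !mxE. Qed.
Lemma dlE (T : pzSemiRingType) n i a j : (dl n i : 'cV[T]_n) a j = (a == i :> nat)%:R.
Proof. by rewrite !mxE. Qed.

Lemma invmxM (R : comUnitRingType) n (A B : 'M[R]_n) :
  A \in unitmx -> B \in unitmx -> invmx (A *m B) = invmx B *m invmx A.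
Proof.
move=> uA uB.
have e : (A *m B) *m (invmx B *m invmx A) = 1%:M.
  by rewrite mulmxA -(mulmxA A) mulmxV // mulmx1 mulmxV.
by rewrite -[LHS]mulmx1 -e mulmxA mulVmx ?mul1mx // unitmx_mul uA uB.
Qed.

Lemma prod_delta (T : comPzSemiRingType) n p (x : T) :
  (p < n)%N -> \prod_(j < n) (if (j : nat) == p then x else 1) = x.
Proof.
move=> hp; rewrite (bigD1 (Ordinal hp)) //= eqxx big1 ?mulr1 // => j hj.
case: eqP => // e; exfalso; move/negP: hj; apply; apply/eqP; exact: val_inj.
Qed.

Lemma colE (T : pzSemiRingType) n p (M : 'M[T]_(p, n)) (f : nat -> 'cV[T]_n) a (j : 'I_n) :
  (M *m \matrix_(b, j) f j b 0) a j = (M *m f j) a 0.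
Proof. by rewrite !mxE; apply: eq_bigr => i _; rewrite mxE. Qed.

Lemma EinEin (T : pzSemiRingType) n k : Ein n k *m Ein n k = Ein n k :> 'M[T]_n.
Proof.
apply/matrixP => a b; rewrite EinM; case: ifP => // h.
by rewrite mxE h.
Qed.

Lemma ModkE (T : pzRingType) n k (Y : 'M[T]_n) :
  Modm k (Kn n k Y) = Kn n k Y + (1%:M - Ein n k).
Proof.
apply/matrixP => r c; rewrite /Kn mxE [in RHS]mxE MEin RkM.
have -> : (1%:M - Ein n k : 'M[T]_n) r c = ((r == c) && ~~ (r < k)%N)%:R.
  rewrite !mxE; case: (r < k)%N; case: (r == c); rewrite /= ?subrr ?subr0 //.
case: ifP => hr; rewrite ?hr ?andbT ?andbF ?mulr0n ?addr0 //;
  by case: ifP; rewrite ?add0r.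
Qed.

Lemma central_pos' (R : realType) n k (eps : R) : n = (k + k)%N ->
  (1 <= k)%N -> (eps = 1 \/ eps = -1) -> forall s : 'M[R]_n,
  s *m Xke R n k eps = Xke R n k eps *m s -> \det s != 0 -> 0 < \det s.
Proof. by move=> e; subst n; exact: central_pos. Qed.

Section ALG.
Variables (R : realType) (n k : nat) (eps : R).
Hypotheses (hk1 : (1 <= k)%N) (hkn : (k.*2 <= n)%N) (heps : eps = 1 \/ eps = -1).
Local Notation X := (Xke R n k eps).
Local Notation c := (cc k eps).
Arguments Kn {T} n k Y.

Lemma ALG (h : 'M[R]_n) : h \in unitmx -> 0 < \det h ->
  good k (h *m X *m invmx h) ->
  exists b, SLupper R n b /\ h *m X *m invmx h = Ad b X.
Proof.
move=> uh dh gY.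
set Y := h *m X *m invmx h.
pose U := h *m X. pose W := Ein n k *m invmx h.
have UE : U *m Ein n k = U by rewrite -mulmxA XEin.
have EW : Ein n k *m W = W by rewrite mulmxA EinEin.
have YUW : Y = U *m W by rewrite /Y /U /W -{1}(@XEin R n k eps) !mulmxA.
have WU : W *m U = 0.
  by rewrite /W /U mulmxA -(mulmxA _ (invmx h)) mulVmx // mulmx1 (@EinX R n k eps hk1 hkn).
have YY : Y *m Y = 0 by rewrite YUW mulmxA -(mulmxA U) WU mulmx0 mul0mx.
pose Wn := W *m Ein n k + (1%:M - Ein n k).
have KF : Modm k (Kn n k Y) = (Rk n k *m U + (1%:M - Ein n k)) *m Wn.
  rewrite ModkE /Kn YUW /Wn !mulmxDl !mulmxDr !mulNmx !mulmxN !mul1mx !mulmx1.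
  rewrite -[Rk n k *m U *m Ein n k]mulmxA UE subrr addr0.
  rewrite [Ein n k *m (W *m Ein n k)]mulmxA EW EinEin subrr addr0.
  rewrite (addrC (W *m Ein n k)) -addrA subrr addr0.
  by rewrite !mulmxA.
have uMod : forall m, (m <= k)%N -> Modm m (Kn n k Y) \in unitmx.
  by move=> m hm; rewrite unitmxE unitfE; exact: gY.
have uWn : Wn \in unitmx.
  by have := uMod k (leqnn k); rewrite KF unitmx_mul => /andP [].
pose pcol (i : nat) : 'cV[R]_n := invmx (Modm i (Kn n k Y)) *m dl n i.
have M1 : forall i, (i < k)%N -> Modm i (Kn n k Y) *m pcol i = dl n i.
  by move=> i hi; rewrite mulKVmx // uMod // ltnW.
have P1 : forall i (a : 'I_n), (i < k)%N -> (i <= a)%N -> pcol i a 0 = (a == i :> nat)%:R.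
  move=> i a hi ha; have := M1 i hi.
  move/matrixP => /(_ a 0); rewrite ModmM ltnNge ha /= => ->.
  by rewrite mxE.
have P2 : forall i (r : 'I_n), (i < k)%N -> (r < i)%N -> (Kn n k Y *m pcol i) r 0 = 0.
  move=> i r hi hr; have := M1 i hi.
  move/matrixP => /(_ r 0); rewrite ModmM hr => ->.
  rewrite mxE; case: eqP => //; lia.
have EP : forall i, (i < k)%N -> Ein n k *m pcol i = pcol i.
  move=> i hi; apply/matrixP => a b; rewrite EinM [b]ord1.
  case: ifP => // ha; rewrite P1 //; last by lia.
  by case: eqP => //; lia.
have KY : forall (v : 'cV[R]_n) (r : 'I_n), Ein n k *m v = v -> (r < k)%N ->
    (Kn n k Y *m v) r 0 = (Y *m v) (rev_ord r) 0.
  by move=> v r ev hr; rewrite /Kn -!mulmxA ev RkM hr.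
have P3 : forall i : 'I_n, (i < k)%N -> (Kn n k Y *m pcol i) i 0 != 0.
  move=> i hi; apply/negP => /eqP e0.
  have hz : Modm i.+1 (Kn n k Y) *m pcol i = 0.
    apply/matrixP => r b; rewrite ModmM [b]ord1 [RHS]mxE.
    case: (ltngtP r i) => hr.
    - by rewrite ltnS ltnW // P2.
    - rewrite ltnNge hr /= P1 //; last exact: ltnW.
      by case: eqP => //; lia.
    - have -> : r = i by apply: val_inj.
      by rewrite ltnSn.
  have : pcol i = 0 by rewrite -(mulKmx (uMod i.+1 hi) (pcol i)) hz mulmx0.
  move/matrixP => /(_ i 0); rewrite P1 // eqxx mxE => /eqP; by rewrite oner_eq0.
pose alpha (j : nat) : 'cV[R]_n := invmx Wn *m (W *m dl n j).
have WnR : forall (v : 'cV[R]_n) (a : 'I_n), (k <= a)%N -> (Wn *m v) a 0 = v a 0.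
  move=> v a ha; rewrite /Wn mulmxDl mulmxBl mul1mx -mulmxA /W -mulmxA.
  rewrite mxE EinM ltnNge ha /= add0r mxE mxE EinM ltnNge ha /=.
  by rewrite subr0.
have A1 : forall j (a : 'I_n), (k <= a)%N -> alpha j a 0 = 0.
  move=> j a ha; rewrite -WnR // mulKVmx // /W -mulmxA EinM.
  by rewrite ltnNge ha.
have EA : forall j, Ein n k *m alpha j = alpha j.
  move=> j; apply/matrixP => a b; rewrite EinM [b]ord1.
  by case: ifP => // ha; rewrite A1 //; lia.
have A2 : forall j, Y *m (dl n j - alpha j) = 0.
  move=> j.
  have WA : W *m alpha j = W *m dl n j.
    have : Wn *m alpha j = W *m dl n j by rewrite mulKVmx.
    rewrite /Wn mulmxDl mulmxBl mul1mx -mulmxA EA subrr addr0 => ->.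
    by [].
  by rewrite YUW mulmxBr -(mulmxA U W) -(mulmxA U W) WA subrr.
pose fcol (j : nat) : 'cV[R]_n :=
  if (j < k)%N then pcol j
  else if (j < n - k)%N then dl n j - alpha j
  else (c (n.-1 - j)%N)^-1 *: (Y *m pcol (n.-1 - j)%N).
pose F : 'M[R]_n := \matrix_(a, j) fcol j a 0.
have YF : Y *m F = F *m X.
  apply/matrixP => a j; rewrite colE (@MX R n k eps hk1 hkn).
  rewrite [in RHS]mxE /= /fcol; case: ifP => hj.
    have -> : (n - j.+1 < k)%N = false by have := ltn_ord j; lia.
    have -> : (n - j.+1 < n - k)%N = false by have := ltn_ord j; lia.
    have -> : (n.-1 - (n - j.+1) = j)%N by have := ltn_ord j; lia.
    rewrite [in RHS]mxE mulrAC mulVf ?mul1r //; exact: (@cc_neq0 R k eps heps).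
  case: ifP => hj2; first by rewrite A2 mxE.
  by rewrite -scalemxAr mulmxA YY mul0mx scaler0 mxE.
have Ftri : forall a j : 'I_n, (j < a)%N -> F a j = 0.
  move=> a j hja; rewrite mxE /fcol; case: ifP => hj.
    by rewrite P1 //; [case: eqP => //; lia | lia].
  case: ifP => hj2.
    rewrite subE dlE A1; last by lia.
    by case: eqP => [e|_]; [lia | rewrite subr0 ?mulr0n].
  have hi : (n.-1 - j < k)%N by have := ltn_ord j; lia.
  rewrite sclE.
  have -> : (Y *m pcol (n.-1 - j)%N) a 0 = (Kn n k Y *m pcol (n.-1 - j)%N) (rev_ord a) 0.
    by rewrite KY ?rev_ordK ?EP //=; have := ltn_ord a; lia.
  rewrite P2 ?mulr0 //=; have := ltn_ord a; lia.
have Fdiag : forall j : 'I_n, F j j != 0.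
  move=> j; rewrite mxE /fcol; case: ifP => hj.
    by rewrite P1 // eqxx oner_eq0.
  case: ifP => hj2.
    by rewrite subE dlE A1 ?eqxx ?subr0 ?oner_eq0 //; lia.
  have hi : (n.-1 - j < k)%N by have := ltn_ord j; lia.
  rewrite sclE mulf_eq0 negb_or invr_eq0 (@cc_neq0 R k eps heps) /=.
  pose i' : 'I_n := rev_ord j.
  have -> : (n.-1 - j = i')%N by rewrite /i' /=; have := ltn_ord j; lia.
  have -> : (Y *m pcol i') j 0 = (Kn n k Y *m pcol i') i' 0.
    by rewrite KY ?rev_ordK ?EP //; rewrite /i' /=; have := ltn_ord j; lia.
  by apply: P3; rewrite /i' /=; have := ltn_ord j; lia.
have dF : \det F != 0.
  rewrite -det_tr det_trig; last first.
    by apply/is_trig_mxP => i j hij; rewrite mxE Ftri.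
  by rewrite prodf_seq_neq0; apply/allP => i _ /=; rewrite mxE Fdiag.
have uF : F \in unitmx by rewrite unitmxE unitfE.
have YE : Y = F *m X *m invmx F by rewrite -YF mulmxK.
suff [dv [dvX dvp]] : exists dv : 'rV[R]_n,
    (forall a b : 'I_n, (b < k)%N -> (a + b == n.-1)%N -> dv 0 a = dv 0 b) /\
    \det F * \prod_j dv 0 j = 1.
  have dX : diag_mx dv *m X = X *m diag_mx dv.
    apply/matrixP => a b; rewrite mul_diag_mx mul_mx_diag mxE [RHS]mxE XE.
    case: ifP => [/andP [hb hab]|_]; last by rewrite mulr0 mul0r.
    by rewrite (dvX a b hb hab) mulrC.
  have ud : diag_mx dv \in unitmx.
    rewrite unitmxE unitfE det_diag; apply/eqP => e.
    by move: dvp; rewrite e mulr0 => /eqP; rewrite eq_sym oner_eq0.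
  exists (F *m diag_mx dv); split.
    split; first by rewrite det_mulmx det_diag.
    by move=> i j hij; rewrite mul_mx_diag mxE Ftri // mul0r.
  rewrite YE /Ad invmxM // !mulmxA -[F *m diag_mx dv *m X]mulmxA dX mulmxA.
  by rewrite -[F *m X *m diag_mx dv *m invmx _]mulmxA mulmxV // mulmx1.
have hX : h *m X = Y *m h by rewrite /Y mulmxKV.
have sX : (invmx F *m h) *m X = X *m (invmx F *m h).
  by rewrite -mulmxA hX YE !mulmxA mulVmx // mul1mx.
have [dpos|dneg] : 0 < \det F \/ \det F < 0.
  by case: (ltP 0 (\det F)) => H; [left | right; rewrite lt_neqAle dF].
- pose l := Num.sqrt ((\det F)^-1).
  exists (\row_j ((if (j == 0 :> nat) then l else 1) * (if (j == n.-1 :> nat) then l else 1))).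
  split.
    move=> a b hb hab; rewrite !mxE.
    have e1 : (a == 0 :> nat) = (b == n.-1 :> nat).
      by move/eqP: hab; have := ltn_ord a; have := ltn_ord b; do 2 case: eqP; lia.
    have e2 : (a == n.-1 :> nat) = (b == 0 :> nat).
      by move/eqP: hab; have := ltn_ord a; have := ltn_ord b; do 2 case: eqP; lia.
    by rewrite e1 e2 mulrC.
  under eq_bigr do rewrite mxE.
  rewrite big_split /= !prod_delta; try lia.
  by rewrite -expr2 sqr_sqrtr ?mulfV // invr_ge0 ltW.
- have hn : (k.*2 < n)%N.
    rewrite ltn_neqAle hkn andbT; apply/negP => /eqP e.
    have := @central_pos' R n k eps (etrans (esym e) (esym (addnn k))) hk1 heps _ sX.
    rewrite det_mulmx det_inv mulf_neq0 ?invr_eq0 //; last by rewrite lt0r_neq0.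
    move=> /(_ isT); rewrite pmulr_lgt0 // invr_gt0 => H.
    by move: (lt_trans H dneg); rewrite ltxx.
  exists (\row_j (if (j == k :> nat) then (\det F)^-1 else 1)).
  split.
    move=> a b hb hab; rewrite !mxE.
    have -> : (a == k :> nat) = false by apply/negbTE/eqP; move/eqP: hab; have := ltn_ord a; lia.
    have -> : (b == k :> nat) = false by apply/negbTE/eqP; lia.
    by [].
  under eq_bigr do rewrite mxE.
  by rewrite prod_delta ?mulfV //; lia.
Qed.

End ALG.

Arguments Kn {T} n k Y.

Section Cont.
Variable R : realType.
Variable T : topologicalType.

Lemma cont_sum_list (I : Type) (r : seq I) (F : I -> T -> R) :
  (forall i, continuous (F i)) -> continuous (fun x => \sum_(i <- r) F i x).
Proof.
move=> H; elim: r => [|a r IH].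
  have -> : (fun x => \sum_(i <- [::]) F i x) = (fun=> 0) by apply: funext => x; rewrite big_nil.
  exact: cst_continuous.
have -> : (fun x => \sum_(i <- a :: r) F i x) = (F a + (fun x => \sum_(i <- r) F i x)).
  by apply: funext => x; rewrite big_cons.
by move=> x; apply: continuousD; [exact: H | exact: IH].
Qed.

Lemma cont_prod_list (I : Type) (r : seq I) (F : I -> T -> R) :
  (forall i, continuous (F i)) -> continuous (fun x => \prod_(i <- r) F i x).
Proof.
move=> H; elim: r => [|a r IH].
  have -> : (fun x => \prod_(i <- [::]) F i x) = (fun=> 1) by apply: funext => x; rewrite big_nil.
  exact: cst_continuous.
have -> : (fun x => \prod_(i <- a :: r) F i x) = (F a \* (fun x => \prod_(i <- r) F i x)).
  by apply: funext => x; rewrite big_cons.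
by move=> x; apply: continuousM; [exact: H | exact: IH].
Qed.

Lemma contM' (f g : T -> R) : continuous f -> continuous g -> continuous (fun x => f x * g x).
Proof. move=> hf hg x; exact: (continuousM (hf x) (hg x)). Qed.

Definition ec p (f : T -> 'M[R]_p) := forall i j, continuous (fun x => f x i j).

Lemma cont_det p (f : T -> 'M[R]_p) : ec f -> continuous (fun x => \det (f x)).
Proof.
move=> H.
have -> : (fun x => \det (f x)) = (fun x => \sum_(s : 'S_p) ((-1) ^+ s * \prod_i f x i (s i))) by [].
apply: cont_sum_list => s; apply: contM'; first exact: cst_continuous.
by apply: cont_prod_list => i; exact: H.
Qed.

Lemma ec_mul p (f g : T -> 'M[R]_p) : ec f -> ec g -> ec (fun x => f x *m g x).
Proof.
move=> Hf Hg i j.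
have -> : (fun x => (f x *m g x) i j) = (fun x => \sum_l (f x i l * g x l j)).
  by apply: funext => x; rewrite mxE.
by apply: cont_sum_list => l; apply: contM'; [exact: Hf | exact: Hg].
Qed.

Lemma ec_cst p (A : 'M[R]_p) : ec (fun=> A).
Proof. by move=> i j; exact: cst_continuous. Qed.

Lemma ec_Modm p m (f : T -> 'M[R]_p) : ec f -> ec (fun x => Modm m (f x)).
Proof.
move=> H i j.
have -> : (fun x => Modm m (f x) i j) = (fun x => if (i < m)%N then f x i j else (i == j)%:R).
  by apply: funext => x; rewrite mxE.
by case: (i < m)%N; [exact: H | exact: cst_continuous].
Qed.

End Cont.

Lemma ec_id (R : realType) p : ec (fun M : 'M[R]_p => M).
Proof. by move=> i j; exact: coord_continuous. Qed.

Definition Phi (R : realType) n k (M : 'M[R]_n) := \prod_(m < k.+1) \det (Modm m (Kn n k M)).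

Lemma Phi_cont (R : realType) n k : continuous (@Phi R n k).
Proof.
apply: cont_prod_list => m; apply: cont_det; apply: ec_Modm.
by apply: ec_mul; [apply: ec_mul; [exact: ec_cst | exact: ec_id] | exact: ec_cst].
Qed.

Lemma Phi_good (R : realType) n k (M : 'M[R]_n) : Phi k M != 0 -> good k M.
Proof.
rewrite /Phi prodf_seq_neq0 => /allP H m hm.
have := H (Ordinal (hm : (m < k.+1)%N)); rewrite mem_index_enum /=; exact.
Qed.

Section Maps.
Variables (T1 T2 : pzRingType) (f : {rmorphism T1 -> T2}) (n k : nat).

Lemma map_Rk : map_mx f (Rk n k) = Rk n k.
Proof. by apply/matrixP => i j; rewrite !mxE rmorph_nat. Qed.

Lemma map_Ein : map_mx f (Ein n k) = Ein n k.
Proof. by apply/matrixP => i j; rewrite !mxE rmorph_nat. Qed.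

Lemma map_Modm m (A : 'M[T1]_n) : map_mx f (Modm m A) = Modm m (map_mx f A).
Proof. by apply/matrixP => i j; rewrite !mxE; case: ifP => _; rewrite ?mxE ?rmorph_nat. Qed.

Lemma map_Kn (A : 'M[T1]_n) : map_mx f (Kn n k A) = Kn n k (map_mx f A).
Proof. by rewrite /Kn !map_mxM map_Rk map_Ein. Qed.

End Maps.

Lemma avoid_roots (R : realType) (p : {poly R}) d : p != 0 -> 0 < d ->
  exists t, 0 < t < d /\ p.[t] != 0.
Proof.
move=> p0 d0; apply/not_existsP => H.
pose rs := [seq d / (i.+2)%:R | i <- iota 0 (size p)].
have := @max_poly_roots R p rs p0.
have -> : all (root p) rs.
  apply/allP => x /mapP [i _ ->]; apply/negPn/negP => hr.
  apply: (H (d / (i.+2)%:R)); split => //.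
  rewrite divr_gt0 ?ltr0n //=.
  rewrite ltr_pdivrMr ?ltr0n // ltr_pMr // ltr1n //.
have -> : uniq rs.
  rewrite map_inj_uniq ?iota_uniq // => i j e.
  have : ((i.+2)%:R : R)^-1 = ((j.+2)%:R)^-1.
    by apply: (mulfI (lt0r_neq0 d0)).
  by move/invr_inj/eqP; rewrite eqr_nat => /eqP [].
by rewrite size_map size_iota ltnn => /(_ isT isT).
Qed.

Lemma Modm_scale (R : realType) n m (c : R) (A : 'M[R]_n) :
  Modm m (c *: A) = diag_mx (\row_r (if (r < m)%N then c else 1)) *m Modm m A.
Proof.
apply/matrixP => r j; rewrite mul_diag_mx !mxE.
by case: ifP => _; rewrite ?mul1r.
Qed.

Lemma good_scale (R : realType) n k (c : R) (Z : 'M[R]_n) : c != 0 ->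
  (forall m, (m <= k)%N -> \det (Modm m (Kn n k Z)) != 0) -> good k (c *: Z).
Proof.
move=> c0 H m hm.
have -> : Kn n k (c *: Z) = c *: Kn n k Z by rewrite /Kn -scalemxAr -scalemxAl.
rewrite Modm_scale det_mulmx det_diag mulf_neq0 ?H //.
rewrite prodf_seq_neq0; apply/allP => r _ /=; rewrite mxE.
by case: ifP => _; rewrite ?oner_eq0.
Qed.

Section Group.
Variables (R : realType) (n : nat).

Lemma SL_unit (a : 'M[R]_n) : \det a = 1 -> a \in unitmx.
Proof. by move=> e; rewrite unitmxE e unitr1. Qed.

Lemma SLu_mul (a b : 'M[R]_n) : SLupper R n a -> SLupper R n b -> SLupper R n (a *m b).
Proof.
move=> [da la] [db lb]; split; first by rewrite det_mulmx da db mulr1.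
move=> i j hij; rewrite mxE big1 // => m _.
case: (ltnP m i) => h; first by rewrite la // mul0r.
by rewrite lb ?mulr0 //; apply: leq_trans hij h.
Qed.

Lemma SLu_inv (a : 'M[R]_n) : SLupper R n a -> SLupper R n (invmx a).
Proof.
move=> [da la]; have ua := SL_unit da.
split; first by rewrite det_inv da invr1.
have dg : forall j : 'I_n, a j j != 0.
  move=> j; have : \det a != 0 by rewrite da oner_eq0.
  rewrite -det_tr det_trig; last by apply/is_trig_mxP => i l h; rewrite mxE la.
  rewrite prodf_seq_neq0 => /allP /(_ j (mem_index_enum j)) /=.
  by rewrite mxE.
move=> i.
suff H : forall m (j : 'I_n), j = m :> nat -> (j < i)%N -> invmx a i j = 0.
  by move=> j hj; exact: (H j j).
elim/ltn_ind => m IH j ejm hji.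
have := mulVmx ua; move/matrixP => /(_ i j).
rewrite mxE (bigD1 j) //= big1 => [|l hl].
  rewrite addr0 mxE.
  have -> : (i == j) = false by apply/negbTE; apply/eqP => e; rewrite e ltnn in hji.
  move/eqP; rewrite mulf_eq0 (negbTE (dg j)) orbF => /eqP; done.
case: (ltnP l j) => h.
  by rewrite (IH l) ?mul0r //; [rewrite -ejm | apply: ltn_trans hji].
have hlj : (j < l)%N by rewrite ltn_neqAle h andbT; apply/eqP => e; move/eqP: hl; apply; apply: val_inj.
by rewrite la // mulr0.
Qed.

Lemma AdM (a b Z : 'M[R]_n) : a \in unitmx -> b \in unitmx ->
  Ad a (Ad b Z) = Ad (a *m b) Z.
Proof. by move=> ua ub; rewrite /Ad invmxM // !mulmxA. Qed.

Lemma AdK (a Z : 'M[R]_n) : a \in unitmx -> Ad (invmx a) (Ad a Z) = Z.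
Proof.
move=> ua; rewrite /Ad invmxK !mulmxA mulVmx // mul1mx.
by rewrite -mulmxA mulVmx // mulmx1.
Qed.

Lemma orbit_eq (X Y c : 'M[R]_n) : SLupper R n c -> Y = Ad c X ->
  Ad_orbit (SLupper R n) Y = Ad_orbit (SLupper R n) X.
Proof.
move=> hc ->; have uc := SL_unit hc.1.
apply/seteqP; split => Z [a ha <-].
  exists (a *m c); first exact: SLu_mul.
  by rewrite AdM // SL_unit // ha.1.
exists (a *m invmx c); first by apply: SLu_mul => //; exact: SLu_inv.
rewrite -AdM ?AdK //; first exact: SL_unit ha.1.
by rewrite unitmx_inv.
Qed.

End Group.

Arguments Kn {T} n k Y.

Section Dens.
Variables (R : realType) (n k : nat) (eps : R).
Hypotheses (hk1 : (1 <= k)%N) (hkn : (k.*2 <= n)%N) (heps : eps = 1 \/ eps = -1).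
Local Notation X := (Xke R n k eps).

Lemma PhiX : Phi k X != 0.
Proof.
rewrite /Phi prodf_seq_neq0; apply/allP => m _ /=.
have hm : (m <= k)%N by have := ltn_ord m; lia.
rewrite det_trig; last first.
  apply/is_trig_mxP => i j hij; rewrite mxE; case: ifP => hi; last first.
    by case: eqP => // e; move: hij; rewrite e ltnn.
  rewrite /Kn MEin RkM XE; case: ifP => // _; case: ifP => // _.
  case: ifP => // /andP [_ /eqP /= e]; have := ltn_ord i; lia.
rewrite prodf_seq_neq0; apply/allP => i _ /=; rewrite mxE.
case: ifP => hi; last by rewrite eqxx oner_eq0.
have hik : (i < k)%N by lia.
rewrite /Kn MEin RkM XE hik /=.
have -> : (n - i.+1 + i == n.-1)%N by apply/eqP; have := ltn_ord i; lia.
exact: (@cc_neq0 R k eps heps).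
Qed.

Lemma DENS (g : 'M[R]_n) : \det g = 1 ->
  closure (Ad_orbit (SLupper R n) X) (Ad g X).
Proof.
move=> dg V hV.
pose Gp : 'M[{poly R}]_n := map_mx polyC g + 'X *: map_mx polyC (1%:M - g).
pose Zp := Gp *m map_mx polyC X *m \adj Gp.
pose Dp := \det Gp.
pose Qp := Dp * \prod_(m < k.+1) \det (Modm m (Kn n k Zp)).
pose G (t : R) := map_mx (horner_eval t) Gp.
have evC : forall t (A : 'M[R]_n), map_mx (horner_eval t) (map_mx polyC A) = A.
  by move=> t A; apply/matrixP => i j; rewrite !mxE horner_evalE hornerC.
have GE : forall t, G t = g + t *: (1%:M - g).
  move=> t; apply/matrixP => i j; rewrite !mxE horner_evalE.
  by rewrite !hornerE.
have G0 : G 0 = g by rewrite GE scale0r addr0.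
have G1 : G 1 = 1%:M by rewrite GE scale1r addrC subrK.
have evZ : forall t, map_mx (horner_eval t) Zp = G t *m X *m \adj (G t).
  by move=> t; rewrite !map_mxM map_mx_adj evC.
have evD : forall t, Dp.[t] = \det (G t).
  by move=> t; rewrite /G det_map_mx.
have evQ : forall t, Qp.[t] = \det (G t) * Phi k (G t *m X *m \adj (G t)).
  move=> t; rewrite -horner_evalE rmorphM rmorph_prod; congr (_ * _); first exact: (evD t).
  by apply: eq_bigr => m _; rewrite -det_map_mx map_Modm map_Kn evZ.
have Q0 : Qp != 0.
  apply/eqP => e; have := evQ 1; rewrite e horner0 G1 adj1 mul1mx mulmx1 det1 mul1r.
  by move/esym/eqP; rewrite (negbTE PhiX).
set Y0 := Ad g X.
have ug : g \in unitmx by rewrite unitmxE dg unitr1.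
have Y0E : Y0 = g *m X *m \adj g by rewrite /Y0 /Ad /invmx ug dg invr1 scale1r.
case/nbhs_ballP: hV => e e0 eV.
pose y (t : R) : 'M[R]_n := (Dp.[t])^-1 *: map_mx (horner_eval t) Zp.
have D00 : Dp.[0] = 1 by rewrite evD G0.
have N1 : \forall t \near (0:R), forall i j, ball (Y0 i j) e (y t i j).
  apply: (@filter_forall _ _ (fun i t => forall j, ball (Y0 i j) e (y t i j)) (nbhs (0:R)) _) => i.
  apply: (@filter_forall _ _ (fun j t => ball (Y0 i j) e (y t i j)) (nbhs (0:R)) _) => j.
  have cy : (fun t => (Dp.[t])^-1 * (Zp i j).[t]) @ (0:R) --> Y0 i j.
    have -> : Y0 i j = (Dp.[0])^-1 * (Zp i j).[0].
      rewrite D00 invr1 mul1r Y0E -G0 -evZ mxE horner_evalE //.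
    have Dn0 : Dp.[0] != 0 by rewrite D00 oner_eq0.
    have c1 : (fun t => (Dp.[t])^-1) @ (0:R) --> (Dp.[0])^-1.
      exact: (cvgV Dn0 (@continuous_horner R Dp 0)).
    have c2 : (fun t => (Zp i j).[t]) @ (0:R) --> (Zp i j).[0].
      exact: (@continuous_horner R (Zp i j) 0).
    exact: (cvgM c1 c2).
  apply: (@filterS _ _ _ (fun t => ball (Y0 i j) e ((Dp.[t])^-1 * (Zp i j).[t]))).
    by move=> t h; rewrite /y sclE [(map_mx _ Zp) i j]mxE.
  exact: (cy _ (nbhsx_ballx _ _ e0)).
have hD : (0:R) < Dp.[0] by rewrite D00 ltr01.
have N2 : \forall t \near (0:R), 0 < Dp.[t].
  exact: (cvgr_gt _ (@continuous_horner R Dp 0) 0 hD).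
have [d d0 dP] := (nbhs_ballP _ _).1 (filterI N1 N2).
have [t [/andP [t0 td] Qt]] := avoid_roots Q0 d0.
have bt : ball (0:R) d t by rewrite -ball_normE /= sub0r normrN gtr0_norm.
have [N1t N2t] := dP t bt.
move: N2t; rewrite evD => dh.
have uh : G t \in unitmx by rewrite unitmxE unitfE lt0r_neq0.
move: Qt; rewrite evQ mulf_eq0 negb_or => /andP [_ Pt].
have yE : y t = Ad (G t) X.
  by rewrite /y evD evZ /Ad /invmx uh scalemxAr.
have gy : good k (G t *m X *m invmx (G t)).
  rewrite -/(Ad (G t) X) -yE /y evD evZ.
  apply: good_scale; first by rewrite invr_eq0 lt0r_neq0.
  exact: Phi_good.
have [b [hb eb]] := ALG hk1 hkn heps uh dh gy.
exists (y t); split; first by exists b => //; rewrite yE; exact: (esym eb).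
exact: (eV (y t) (conj e0 N1t)).
Qed.

End Dens.

Unset Implicit Arguments.

Theorem lemma3p1 (R : realType) (n k : nat) (eps : R) :
  (4 <= n)%N -> (2 <= k)%N -> (k.*2 <= n)%N -> (eps = 1 \/ eps = -1) ->
  let X := Xke R n k eps in
  let O := Ad_orbit (SL R n) X in
  sl R n X /\
  dense_in (T := 'M[R]_n) (Ad_orbit (SLupper R n) X) O /\
  (forall Y, O Y -> dense_in (T := 'M[R]_n) (Ad_orbit (SLupper R n) Y) O ->
     Ad_orbit (SLupper R n) Y = Ad_orbit (SLupper R n) X).
Proof.
move=> hn hk hkn heps X O.
have hk1 : (1 <= k)%N by lia.
split; first exact: (X_tr eps hk1 hkn).
have OX : O X.
  exists 1%:M; first by rewrite /SL /= det1.
  by rewrite /Ad invmx1 mul1mx mulmx1.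
split.
  split.
    by move=> Z [b hb <-]; exists b => //; exact: hb.1.
  move=> Z [g hg <-]; exact: (DENS hk1 hkn heps hg).
move=> Y [g hg <-] [_ dY].
have ug : g \in unitmx by rewrite unitmxE hg unitr1.
have nX : nbhs X [set M | Phi k M != 0].
  exact: (cvgr_neq0 _ (@Phi_cont R n k X) (PhiX hk1 hkn heps)).
have [M [[a ha <-] PM]] := dY X OX _ nX.
have ua : a \in unitmx by rewrite unitmxE ha.1 unitr1.
have gM : good k (Ad (a *m g) X) by rewrite -AdM //; exact: Phi_good.
have uag : a *m g \in unitmx by rewrite unitmx_mul ua ug.
have dag : 0 < \det (a *m g) by rewrite det_mulmx ha.1 hg mul1r ltr01.
have [b [hb eb]] := ALG hk1 hkn heps uag dag gM.
apply: (@orbit_eq R n X (Ad g X) (invmx a *m b)).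
  by apply: SLu_mul => //; exact: SLu_inv.
rewrite -AdM; last by rewrite unitmxE hb.1 unitr1.
  by rewrite -/(Ad (a *m g) X) in eb; rewrite -eb -AdM // AdK.
by rewrite unitmx_inv.
Qed.
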